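(* Every equivalence corelation in $\mathbf{MetCH_{sep}}$ is effective.
   Context: A metric on a set $X$ is a map $d\colon X\times X\to[0,\infty]$ with $d(x,x)=0$ and $d(x,z)\le d(x,y)+d(y,z)$ (not necessarily symmetric, $\infty$ allowed); separated means $d(x,y)=0=d(y,x)$ implies $x=y$. A separated metric compact Hausdorff space is a compact Hausdorff space with a separated metric continuous $X\times X\to[0,\infty]$ for the upper topology on $[0,\infty]$ (open sets $]u,\infty]$); $\mathbf{MetCH_{sep}}$ is the category of these with continuous non-expansive maps. $X+X$ denotes the coproduct (disjoint union, coproduct topology, metric equal to $d$ within each copy and $\infty$ between copies). A binary corelation on $X$ is a surjective morphism $\binom{q_0}{q_1}\colon X+X\to S$ (given by $q_0,q_1\colon X\to S$), taken up to isomorphism under $X+X$. It is reflexive if there is a morphism $e\colon S\to X$ with $e\circ q_0=e\circ q_1=1_X$; symmetric if there is $s\colon S\to S$ with $s\circ q_0=q_1$ and $s\circ q_1=q_0$; transitive if, letting $\lambda_0,\lambda_1\colon S\to P$ be the pushout of $q_1$ and $q_0$ (so $\lambda_0\circ q_1=\lambda_1\circ q_0$), there is $t\colon S\to P$ with $t\circ q_0=\lambda_0\circ q_0$ and $t\circ q_1=\lambda_1\circ q_1$. An equivalence corelation is one that is reflexive, symmetric and transitive. It is effective if, with $i\colon A\to X$ the equaliser of $q_0,q_1$ in $\mathbf{MetCH_{sep}}$, the square $q_0\circ i=q_1\circ i$ is a pushout in $\mathbf{MetCH_{sep}}$ (i.e. $(q_0,q_1)$ is the cokernel pair of its equaliser).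 *)

(* Defs.v *)
From HB Require Import structures.
From mathcomp Require Import all_boot all_order all_algebra.
From mathcomp Require Import all_classical all_reals topology.
Set Implicit Arguments. Unset Strict Implicit. Unset Printing Implicit Defensive.
Import Order.TTheory GRing.Theory Num.Theory.

Local Open Scope classical_set_scope.
Local Open Scope ereal_scope.

Section MetCHsep.
Variable R : realType.

(* An object of MetCH_sep: a compact Hausdorff space with a separated
   (possibly asymmetric, possibly infinite) metric d : X x X -> [0,oo]
   which is continuous for the upper topology on [0,oo], i.e. every
   preimage of ]u,oo] is open in X x X (for u = +oo the preimage is empty). *)
Record metCH := MetCH {
  mc_top :> topologicalType;
  mc_d : mc_top -> mc_top -> \bar R;
  mc_d_ge0 : forall x y, 0 <= mc_d x y;
  mc_d_refl : forall x, mc_d x x = 0;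
  mc_d_triangle : forall x y z, mc_d x z <= mc_d x y + mc_d y z;
  mc_d_sep : forall x y, mc_d x y = 0 -> mc_d y x = 0 -> x = y;
  mc_d_cont : forall u : R,
      open [set p : mc_top * mc_top | u%:E < mc_d p.1 p.2];
  mc_compact : compact [set: mc_top];
  mc_hausdorff : hausdorff_space mc_top }.

Definition mor (X Y : metCH) (f : X -> Y) : Prop :=
  continuous f /\ forall x y : X, mc_d (f x) (f y) <= mc_d x y.

Definition is_pushout (A B C P : metCH) (f : A -> B) (g : A -> C)
    (p1 : B -> P) (p2 : C -> P) : Prop :=
  [/\ mor p1, mor p2, p1 \o f = p2 \o g &
    forall (Q : metCH) (h1 : B -> Q) (h2 : C -> Q),
      mor h1 -> mor h2 -> h1 \o f = h2 \o g ->
      exists u : P -> Q, [/\ mor u, u \o p1 = h1, u \o p2 = h2 &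
        forall v : P -> Q, mor v -> v \o p1 = h1 -> v \o p2 = h2 -> v = u]].

Definition is_equaliser (E X Y : metCH) (f g : X -> Y) (i : E -> X) : Prop :=
  [/\ mor i, f \o i = g \o i &
    forall (Z : metCH) (h : Z -> X), mor h -> f \o h = g \o h ->
      exists u : Z -> E, [/\ mor u, i \o u = h &
        forall v : Z -> E, mor v -> i \o v = h -> v = u]].

(* A binary corelation on X: a surjective morphism (q0 q1) : X + X -> S.
   A map X + X -> S is a morphism iff both components are (coproduct
   topology, metric oo between copies), and it is surjective iff q0, q1
   are jointly surjective. *)
Definition corelation (X S : metCH) (q0 q1 : X -> S) : Prop :=
  [/\ mor q0, mor q1 & forall s : S, exists x : X, q0 x = s \/ q1 x = s].

Definition reflexive_corel (X S : metCH) (q0 q1 : X -> S) : Prop :=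
  exists e : S -> X, [/\ mor e, e \o q0 = id & e \o q1 = id].

Definition symmetric_corel (X S : metCH) (q0 q1 : X -> S) : Prop :=
  exists s : S -> S, [/\ mor s, s \o q0 = q1 & s \o q1 = q0].

Definition transitive_corel (X S : metCH) (q0 q1 : X -> S) : Prop :=
  forall (P : metCH) (l0 l1 : S -> P), is_pushout q1 q0 l0 l1 ->
    exists t : S -> P, [/\ mor t, t \o q0 = l0 \o q0 & t \o q1 = l1 \o q1].

Definition equivalence_corel (X S : metCH) (q0 q1 : X -> S) : Prop :=
  [/\ corelation q0 q1, reflexive_corel q0 q1, symmetric_corel q0 q1
    & transitive_corel q0 q1].

Definition effective_corel (X S : metCH) (q0 q1 : X -> S) : Prop :=
  forall (A : metCH) (i : A -> X), is_equaliser q0 q1 i ->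
    is_pushout i i q0 q1.

End MetCHsep.

(* Main.v *)
Require Import Defs.
From HB Require Import structures.
From mathcomp Require Import all_boot all_order all_algebra.
From mathcomp Require Import all_classical all_reals topology.
From mathcomp Require Import ereal.
From mathcomp Require Import ring lra.
Set Implicit Arguments. Unset Strict Implicit. Unset Printing Implicit Defensive.
Import Order.TTheory GRing.Theory Num.Theory.
Local Open Scope classical_set_scope.

Lemma cont_fst (T U : topologicalType) : continuous (@fst T U).
Proof. by move=> [x y]; exact: cvg_fst. Qed.
Lemma cont_snd (T U : topologicalType) : continuous (@snd T U).
Proof. by move=> [x y]; exact: cvg_snd. Qed.
Lemma cont_pair (Z T U : topologicalType) (f : Z -> T) (g : Z -> U) :
  continuous f -> continuous g -> continuous (fun z => (f z, g z)).
Proof. by move=> cf cg z; apply: cvg_pair; [exact: cf|exact: cg]. Qed.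

Lemma hausdorff_prod2 (T U : topologicalType) :
  hausdorff_space T -> hausdorff_space U -> hausdorff_space (T * U)%type.
Proof.
rewrite !open_hausdorff => hT hU [x1 x2] [y1 y2] /= xy.
have [e1|n1] := eqVneq x1 y1.
  have n2 : x2 != y2 by apply: contraNneq xy => ->; rewrite e1.
  have [[A B] /= [xA yB] [oA oB AB0]] := hU _ _ n2.
  exists (snd @^-1` A, snd @^-1` B); first by rewrite !inE /=; rewrite !inE in xA yB.
  split; [apply: open_comp => //; move=> *; exact: cont_snd..|].
  apply/eqP; rewrite -subset0 => -[a b] /= [aA aB].
  by move/eqP: AB0; rewrite -subset0; apply; split; eauto.
have [[A B] /= [xA yB] [oA oB AB0]] := hT _ _ n1.
exists (fst @^-1` A, fst @^-1` B); first by rewrite !inE /=; rewrite !inE in xA yB.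
split; [apply: open_comp => //; move=> *; exact: cont_fst..|].
apply/eqP; rewrite -subset0 => -[a b] /= [aA aB].
by move/eqP: AB0; rewrite -subset0; apply; split; eauto.
Qed.

Lemma closed_eqf (Z T : topologicalType) (f g : Z -> T) :
  hausdorff_space T -> continuous f -> continuous g ->
  closed [set z | f z = g z].
Proof.
rewrite open_hausdorff => hT cf cg.
rewrite -openC.
have -> : ~` [set z | f z = g z] =
  \bigcup_(UV in [set UV : set T * set T | [/\ open UV.1, open UV.2 & UV.1 `&` UV.2 = set0]])
     (f @^-1` UV.1 `&` g @^-1` UV.2).
  rewrite eqEsubset; split.
    move=> z /= /eqP fg; have [[A B] /= [xA yB] [oA oB /eqP AB0]] := hT _ _ fg.
    by exists (A, B) => //; split; [rewrite inE in xA|rewrite inE in yB].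
  move=> z [[A B] /= [oA oB AB0] [Az Bz]] fg.
  have : (A `&` B) (f z) by split => //; rewrite fg.
  by rewrite AB0.
apply: bigcup_open => -[A B] /= [oA oB _]; apply: openI.
  by apply: open_comp => // *; exact: cf.
by apply: open_comp => // *; exact: cg.
Qed.

Lemma paste_cont (Z Y W : topologicalType) (f0 f1 : Z -> Y) (g : Y -> W) :
  compact [set: Z] -> hausdorff_space Y -> continuous f0 -> continuous f1 ->
  (forall y, exists z, f0 z = y \/ f1 z = y) ->
  continuous (g \o f0) -> continuous (g \o f1) -> continuous g.
Proof.
move=> cZ hY c0 c1 sur cg0 cg1; apply/continuous_closedP => C cC.
have -> : g @^-1` C = f0 @` ((g \o f0) @^-1` C) `|` f1 @` ((g \o f1) @^-1` C).
  rewrite eqEsubset; split.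
    move=> y Cy; have [z [fz|fz]] := sur y; subst y; [left|right]; exists z => //.
  by move=> y [[z Cz <-]|[z Cz <-]].
have key (f : Z -> Y) : continuous f -> continuous (g \o f) ->
    closed (f @` ((g \o f) @^-1` C)).
  move=> cf cgf; apply: compact_closed => //; apply: continuous_compact.
    exact: continuous_subspaceT.
  apply: (subclosed_compact _ cZ) => //.
  by move/continuous_closedP : cgf; apply.
by apply: closedU; apply: key.
Qed.

Section lsc.
Variable R : realType.
Local Open Scope ereal_scope.

Lemma open_lsc_add (T : topologicalType) (f g : T -> \bar R) (c : R) :
  (forall r : R, open [set z | r%:E < f z]) ->
  (forall r : R, open [set z | r%:E < g z]) ->
  (forall z, 0 <= f z) -> (forall z, 0 <= g z) ->
  open [set z | c%:E < f z + g z].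
Proof.
move=> oF oG f0 g0.
have -> : [set z | c%:E < f z + g z] =
   \bigcup_(a in [set: R]) ([set z | a%:E < f z] `&` [set z | (c - a)%:E < g z]).
  rewrite eqEsubset; split; last first.
    move=> z [a _ [/= az bz]]; have := lteD az bz.
    by rewrite -EFinD addrC subrK.
  move=> z /= czz.
  case/gee0P: (f0 z) => [fz|[r1 r10 fz]]; case/gee0P: (g0 z) => [gz|[r2 r20 gz]];
     rewrite fz gz in czz.
  - by exists 0%R => //; split => /=; rewrite ?fz ?gz ltry.
  - exists (c - r2 + 1)%R => //; split => /=; rewrite ?fz ?gz ?ltry //.
    by rewrite lte_fin; lra.
  - exists (r1 - 1)%R => //; split => /=; rewrite ?fz ?gz ?ltry // lte_fin; lra.
  - rewrite -EFinD lte_fin in czz.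
    exists (r1 - (r1 + r2 - c) / 2)%R => //; split => /=; rewrite ?fz ?gz lte_fin; lra.
apply: bigcup_open => a _; apply: openI; [exact: oF|exact: oG].
Qed.
End lsc.

Section Corel.
Variables (R : realType) (X S : metCH R) (q0 q1 : X -> S) (e : S -> X) (sw : S -> S).
Hypotheses (m0 : mor q0) (m1 : mor q1) (me : mor e)
  (e0 : e \o q0 = id) (e1 : e \o q1 = id) (msw : mor sw)
  (sw0 : sw \o q0 = q1) (sw1 : sw \o q1 = q0)
  (sur : forall s, exists x, q0 x = s \/ q1 x = s).
Local Open Scope ereal_scope.

Lemma eq0 x : e (q0 x) = x. Proof. exact: (congr1 (fun f => f x) e0). Qed.
Lemma eq1 x : e (q1 x) = x. Proof. exact: (congr1 (fun f => f x) e1). Qed.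
Lemma sq0 x : sw (q0 x) = q1 x. Proof. exact: (congr1 (fun f => f x) sw0). Qed.
Lemma sq1 x : sw (q1 x) = q0 x. Proof. exact: (congr1 (fun f => f x) sw1). Qed.

Lemma iso0 x y : mc_d (q0 x) (q0 y) = mc_d x y.
Proof.
apply/le_anti/andP; split; first exact: m0.2.
by rewrite -{1}(eq0 x) -{1}(eq0 y); exact: me.2.
Qed.
Lemma iso1 x y : mc_d (q1 x) (q1 y) = mc_d x y.
Proof.
apply/le_anti/andP; split; first exact: m1.2.
by rewrite -{1}(eq1 x) -{1}(eq1 y); exact: me.2.
Qed.

Definition rho x y := mc_d (q0 x) (q1 y).

Lemma rho_sym x y : mc_d (q1 x) (q0 y) = rho x y.
Proof.
apply/le_anti/andP; split.
  by rewrite /rho -sq0 -(sq1 y); exact: msw.2.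
by rewrite /rho -sq1 -(sq0 y); exact: msw.2.
Qed.

Lemma d_le_rho x y : mc_d x y <= rho x y.
Proof. by rewrite -{1}(eq0 x) -{1}(eq1 y); exact: me.2. Qed.

Lemma rho_ge0 x y : 0 <= rho x y. Proof. exact: mc_d_ge0. Qed.

Lemma rho_tri_r x w y : rho x y <= rho x w + mc_d w y.
Proof. by rewrite -iso1; exact: mc_d_triangle. Qed.
Lemma rho_tri_l x w y : rho x y <= mc_d x w + rho w y.
Proof. by rewrite -iso0; exact: mc_d_triangle. Qed.
Lemma rho_tri x w y : rho x y <= rho x w + rho w y.
Proof. apply: (le_trans (rho_tri_r x w y)); apply: leeD2l; exact: d_le_rho. Qed.

Lemma q01_eq x y : q0 x = q1 y -> x = y.
Proof. by move=> h; rewrite -(eq0 x) h eq1. Qed.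

Lemma rho0_A z : rho z z = 0 -> q0 z = q1 z.
Proof. by move=> h; apply: mc_d_sep => //; rewrite rho_sym. Qed.

Definition L (b : bool) (s : S) : (S * S)%type :=
  if b then (q1 (e s), s) else (s, q0 (e s)).

Lemma L_inj b s s' : L b s = L b s' -> s = s'.
Proof. by case: b => /= -[]. Qed.

Lemma L_ov a a' : L false a = L true a' -> exists z, a = q1 z /\ a' = q0 z.
Proof.
move=> [h1 h2]; exists (e a'); split => //.
by rewrite -h2 eq0.
Qed.

Lemma L_ov_iso b a a' c c' : L b a = L (~~ b) a' -> L b c = L (~~ b) c' ->
  mc_d a c = mc_d a' c'.
Proof.
case: b => /= h1 h2.
- have [z [-> ->]] := L_ov (esym h1); have [w [-> ->]] := L_ov (esym h2).
  by rewrite iso0 iso1.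
- have [z [-> ->]] := L_ov h1; have [w [-> ->]] := L_ov h2.
  by rewrite iso0 iso1.
Qed.

Lemma L1_le b s s' : mc_d (L b s).1 (L b s').1 <= mc_d s s'.
Proof.
case: b => //=; rewrite iso1; exact: me.2.
Qed.
Lemma L2_le b s s' : mc_d (L b s).2 (L b s').2 <= mc_d s s'.
Proof.
case: b => //=; rewrite iso0; exact: me.2.
Qed.

Definition chain2 (p p' : (S * S)%type) (c : \bar R) :=
  exists i s r j r' s', [/\ L i s = p, L j s' = p', L i r = L j r' &
     mc_d s r + mc_d r' s' <= c].

Lemma chain2_mono p p' c c' : c <= c' -> chain2 p p' c -> chain2 p p' c'.
Proof.
move=> cc [i [s [r [j [r' [s' [h1 h2 h3 h4]]]]]]].
by exists i, s, r, j, r', s'; split => //; exact: le_trans cc.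
Qed.

Lemma chain2_refl b s : chain2 (L b s) (L b s) 0.
Proof. by exists b, s, s, b, s, s; rewrite !mc_d_refl adde0. Qed.

Lemma chain2_step b s s' : chain2 (L b s) (L b s') (mc_d s s').
Proof. by exists b, s, s', b, s', s'; rewrite !mc_d_refl adde0. Qed.

Lemma chain2_append p c k t t' :
  chain2 p (L k t) c -> chain2 p (L k t') (c + mc_d t t').
Proof.
move=> [i [s [r [j [r' [s' [h1 h2 h3 h4]]]]]]].
have [kj|/negPf kj] := eqVneq k j.
  subst k; move: h2 => /L_inj <-.
  exists i, s, r, j, r', t'; split => //.
  apply: (@le_trans _ _ (mc_d s r + (mc_d r' s' + mc_d s' t'))).
    by apply: leeD2l; exact: mc_d_triangle.
  by rewrite addeA; apply: leeD2r.
have kNj : k = ~~ j by move: kj; clear; case: k; case: j.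
have [ij|/negPf ij] := eqVneq i j.
  subst i; move: h3 => /L_inj rr; subst r'.
  exists j, s, s', k, t, t'; split => //.
  apply: leeD2r; apply: (le_trans (mc_d_triangle _ r _)); exact: h4.
have iNj : i = ~~ j by move: ij; clear; case: i; case: j.
subst k i.
have drt : mc_d r t = mc_d r' s'.
  apply: (@L_ov_iso (~~ j)); first by rewrite negbK.
  by rewrite negbK h2.
exists (~~ j), s, t', (~~ j), t', t'; split => //.
rewrite mc_d_refl adde0.
apply: (le_trans (mc_d_triangle _ t _)); apply: leeD2r.
apply: (le_trans (mc_d_triangle _ r _)); rewrite drt; exact: h4.
Qed.

Lemma chain2_trans p p' p'' c1 c2 :
  chain2 p p' c1 -> chain2 p' p'' c2 -> chain2 p p'' (c1 + c2).
Proof.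
move=> ch1 [j [u [v [k [v' [w [h1 h2 h3 h4]]]]]]].
subst p' p''.
have := chain2_append v ch1; rewrite h3 => /(chain2_append w).
apply: chain2_mono; rewrite -addeA; exact: leeD2l.
Qed.

Lemma chain2_ge0 p p' c : chain2 p p' c -> 0 <= c.
Proof.
move=> [i [s [r [j [r' [s' [h1 h2 h3 h4]]]]]]].
by apply: le_trans h4; apply: adde_ge0; exact: mc_d_ge0.
Qed.

Lemma chain2_coord p p' c : chain2 p p' c ->
  mc_d p.1 p'.1 <= c /\ mc_d p.2 p'.2 <= c.
Proof.
move=> [i [s [r [j [r' [s' [<- <- h3 h4]]]]]]].
split; apply: le_trans h4.
  apply: (le_trans (mc_d_triangle _ (L i r).1 _)); apply: leeD; first exact: L1_le.
  rewrite h3; exact: L1_le.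
apply: (le_trans (mc_d_triangle _ (L i r).2 _)); apply: leeD; first exact: L2_le.
rewrite h3; exact: L2_le.
Qed.

Lemma comp_cont (A B C : topologicalType) (f : A -> B) (g : B -> C) :
  continuous f -> continuous g -> continuous (fun x => g (f x)).
Proof. by move=> cf cg x; apply: continuous_comp; [exact: cf|exact: cg]. Qed.

Lemma L_cont b : continuous (L b).
Proof.
case: b; rewrite /L => x; apply: cvg_pair => //.
- by apply: continuous_comp; [exact: me.1|exact: m1.1].
- by apply: continuous_comp; [exact: me.1|exact: m0.1].
Qed.

Lemma compactS2 : compact [set: (S * S)%type].
Proof. by rewrite -setXTT; apply: compact_setX; exact: mc_compact. Qed.

Lemma hausS2 : hausdorff_space (S * S)%type.
Proof. by apply: hausdorff_prod2; exact: mc_hausdorff. Qed.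

Definition Pset : set (S * S)%type := [set p | exists b s, p = L b s].
Definition PT : topologicalType := Pset.

Definition lP b s : PT := exist _ (L b s) (mem_set (ex_intro _ b (ex_intro _ s erefl))).

Lemma val_lP b s : val (lP b s) = L b s. Proof. by []. Qed.

Lemma PT_cover (p : PT) : exists b s, p = lP b s.
Proof.
case: p => v hv; have := set_mem hv => -[b [s hs]]; subst v.
by exists b, s; apply: val_inj.
Qed.

Lemma val_cont : continuous (val : PT -> (S * S)%type).
Proof. exact: (@initial_continuous Pset _ set_val). Qed.

Lemma lP_cont b : continuous (lP b).
Proof. by apply: continuous_comp_initial; exact: L_cont. Qed.

Lemma PT_compact : compact [set: PT].
Proof.
have -> : [set: PT] = lP false @` setT `|` lP true @` setT.
  rewrite eqEsubset; split => // p _; have [b [s ->]] := PT_cover p.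
  by case: b; [right|left]; exists s.
by apply: compactU; apply: continuous_compact;
  [apply: continuous_subspaceT; exact: lP_cont| exact: mc_compact|
   apply: continuous_subspaceT; exact: lP_cont| exact: mc_compact].
Qed.

Lemma PT_hausdorff : hausdorff_space PT.
Proof.
have := hausS2; rewrite !open_hausdorff => h p p' pp.
have : val p != val p' by apply: contraNneq pp => /val_inj ->.
move=> /h [[U V] /= [pU pV] [oU oV UV]].
exists (val @^-1` U, val @^-1` V) => /=.
  by rewrite !inE; rewrite !inE in pU pV.
split.
- by apply: open_comp => // z _; exact: val_cont.
- by apply: open_comp => // z _; exact: val_cont.
- apply/eqP; rewrite -subset0 => z [zU zV]; move/eqP: UV; rewrite -subset0.
  by apply; split; eauto.
Qed.

Definition dP (p p' : PT) : \bar R := ereal_inf [set c | chain2 (val p) (val p') c].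

Lemma dP_ge0 p p' : 0 <= dP p p'.
Proof. by apply: le_ereal_inf_tmp => c /chain2_ge0. Qed.

Lemma dP_refl p : dP p p = 0.
Proof.
apply/le_anti/andP; split; last exact: dP_ge0.
apply: ge_ereal_inf; exists 0 => //.
have [b [s ->]] := PT_cover p; exact: chain2_refl.
Qed.

Lemma inf_add (A B C : set (\bar R)) :
  (forall a, A a -> 0 <= a) -> (forall b, B b -> 0 <= b) ->
  (forall a b, A a -> B b -> C (a + b)) ->
  ereal_inf C <= ereal_inf A + ereal_inf B.
Proof.
move=> A0 B0 ABC.
have iA0 : 0 <= ereal_inf A by apply: le_ereal_inf_tmp.
have iB0 : 0 <= ereal_inf B by apply: le_ereal_inf_tmp.
have [fA|nfA] := boolP (ereal_inf A \is a fin_num); last first.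
  have -> : ereal_inf A = +oo.
    move: nfA iA0; rewrite fin_numE negb_and !negbK => /orP[/eqP->|/eqP->] //.
  by rewrite addye ?leey // gt_eqF // (lt_le_trans _ iB0) // ltNy0.
have [fB|nfB] := boolP (ereal_inf B \is a fin_num); last first.
  have -> : ereal_inf B = +oo.
    move: nfB iB0; rewrite fin_numE negb_and !negbK => /orP[/eqP->|/eqP->] //.
  by rewrite addey ?leey // gt_eqF // (lt_le_trans _ iA0) // ltNy0.
apply/lee_addgt0Pr => eps eps0.
have eps20 : (0 < eps / 2)%R by rewrite divr_gt0.
have [a Aa ha] := lb_ereal_inf_adherent eps20 fA.
have [b Bb hb] := lb_ereal_inf_adherent eps20 fB.
apply: (le_trans (ereal_inf_lbound (ABC _ _ Aa Bb))).
have -> : eps%:E = (eps / 2)%:E + (eps / 2)%:E by rewrite -EFinD -splitr.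
rewrite addeACA; apply: leeD; exact: ltW.
Qed.

Lemma dP_tri p p' p'' : dP p p'' <= dP p p' + dP p' p''.
Proof.
apply: inf_add; [exact: chain2_ge0|exact: chain2_ge0|].
by move=> a b ha hb; exact: chain2_trans ha hb.
Qed.

Lemma dP_coord p p' :
  mc_d (val p).1 (val p').1 <= dP p p' /\ mc_d (val p).2 (val p').2 <= dP p p'.
Proof.
by split; apply: le_ereal_inf_tmp => c /chain2_coord [].
Qed.

Lemma dP_sep p p' : dP p p' = 0 -> dP p' p = 0 -> p = p'.
Proof.
move=> h h'; have [a1 a2] := dP_coord p p'; have [b1 b2] := dP_coord p' p.
rewrite h in a1 a2; rewrite h' in b1 b2.
apply: val_inj; move: (val p) (val p') a1 a2 b1 b2 => [x1 x2] [y1 y2] /= a1 a2 b1 b2.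
congr pair; apply: mc_d_sep; apply/le_anti/andP; split => //; exact: mc_d_ge0.
Qed.

Lemma dP_le p p' (r : R) : dP p p' <= r%:E <->
  forall eps, (0 < eps)%R -> chain2 (val p) (val p') (r + eps)%:E.
Proof.
split.
- move=> h eps eps0; have : dP p p' < (r + eps)%:E.
    by apply: le_lt_trans h _; rewrite lte_fin ltrDl.
  by move/ereal_inf_lt => [c ch clt]; apply: chain2_mono ch; exact: ltW.
- move=> h; apply/lee_addgt0Pr => eps eps0; rewrite -EFinD.
  by apply: ereal_inf_lbound; exact: h.
Qed.

Lemma d_lsc (T : topologicalType) (f g : T -> S) : continuous f -> continuous g ->
  forall r : R, open [set z | r%:E < mc_d (f z) (g z)].
Proof.
move=> cf cg r.
have -> : [set z | r%:E < mc_d (f z) (g z)] =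
  (fun z => (f z, g z)) @^-1` [set p : S * S | r%:E < mc_d p.1 p.2] by [].
apply: open_comp; last exact: mc_d_cont.
by move=> z _; apply: cvg_pair; [exact: cf|exact: cg].
Qed.

Lemma closed_le (T : topologicalType) (f : T -> \bar R) (c : R) :
  open [set z | c%:E < f z] -> closed [set z | f z <= c%:E].
Proof.
move=> o; have -> : [set z | f z <= c%:E] = ~` [set z | c%:E < f z].
  by rewrite predeqE => z /=; rewrite leNgt; split => /negP.
by rewrite closedC.
Qed.

Definition Kset i j (c : R) : set ((S * S) * (S * S))%type :=
  [set w | L i w.1.2 = L j w.2.1 /\ mc_d w.1.1 w.1.2 + mc_d w.2.1 w.2.2 <= c%:E].

Definition Fmap i j (w : ((S * S) * (S * S))%type) : (PT * PT)%type :=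
  (lP i w.1.1, lP j w.2.2).

Lemma c11 (A B C D : topologicalType) : continuous (fun w : ((A * B) * (C * D))%type => w.1.1).
Proof. exact: (comp_cont (@cont_fst _ _) (@cont_fst _ _)). Qed.
Lemma c12 (A B C D : topologicalType) : continuous (fun w : ((A * B) * (C * D))%type => w.1.2).
Proof. exact: (comp_cont (@cont_fst _ _) (@cont_snd _ _)). Qed.
Lemma c21 (A B C D : topologicalType) : continuous (fun w : ((A * B) * (C * D))%type => w.2.1).
Proof. exact: (comp_cont (@cont_snd _ _) (@cont_fst _ _)). Qed.
Lemma c22 (A B C D : topologicalType) : continuous (fun w : ((A * B) * (C * D))%type => w.2.2).
Proof. exact: (comp_cont (@cont_snd _ _) (@cont_snd _ _)). Qed.

Lemma Kset_compact i j c : compact (Kset i j c).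
Proof.
apply: (@subclosed_compact _ _ [set: ((S * S) * (S * S))%type]) => //; last first.
  by rewrite -setXTT; apply: compact_setX; exact: compactS2.
have -> : Kset i j c = [set w | L i w.1.2 = L j w.2.1] `&`
    [set w | mc_d w.1.1 w.1.2 + mc_d w.2.1 w.2.2 <= c%:E] by [].
apply: closedI.
  apply: (@closed_eqf _ (S * S)%type (fun w => L i w.1.2) (fun w => L j w.2.1)).
  - exact: hausS2.
  - exact: (comp_cont (@c12 S S S S) (@L_cont i)).
  - exact: (comp_cont (@c21 S S S S) (@L_cont j)).
apply: closed_le; apply: open_lsc_add; try by move=> ?; exact: mc_d_ge0.
- by apply: d_lsc; [exact: c11|exact: c12].
- by apply: d_lsc; [exact: c21|exact: c22].
Qed.

Lemma G_closed i j c : closed (Fmap i j @` Kset i j c).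
Proof.
apply: compact_closed; first by apply: hausdorff_prod2; exact: PT_hausdorff.
apply: continuous_compact; last exact: Kset_compact.
apply: continuous_subspaceT; rewrite /Fmap.
apply: (@cont_pair _ _ _ (fun w => lP i w.1.1) (fun w => lP j w.2.2)).
  exact: (comp_cont (@c11 S S S S) (@lP_cont i)).
exact: (comp_cont (@c22 S S S S) (@lP_cont j)).
Qed.

Lemma Cset_eq c : [set pp : (PT * PT)%type | chain2 (val pp.1) (val pp.2) c%:E] =
  (Fmap false false @` Kset false false c `|` Fmap false true @` Kset false true c)
  `|` (Fmap true false @` Kset true false c `|` Fmap true true @` Kset true true c).
Proof.
rewrite eqEsubset; split.
  move=> [p p'] /= [i [s [r [j [r' [s' [h1 h2 h3 h4]]]]]]].
  have ep : p = lP i s by apply: val_inj.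
  have ep' : p' = lP j s' by apply: val_inj.
  have hK : Kset i j c ((s, r), (r', s')) by split.
  have hF : Fmap i j ((s, r), (r', s')) = (p, p') by rewrite ep ep'.
  clear h1 h2 h3 h4 ep ep'; move: hK hF.
  by case: i; case: j => hK hF; [right; right|right; left|left; right|left; left];
    exists ((s, r), (r', s')).
have H i j : Fmap i j @` Kset i j c `<=`
    [set pp : (PT * PT)%type | chain2 (val pp.1) (val pp.2) c%:E].
  move=> _ [[[s r] [r' s']] [/= h3 h4] <-].
  by exists i, s, r, j, r', s'.
by move=> pp [[|]|[|]]; apply: H.
Qed.

Lemma dP_lsc (r : R) : open [set pp : (PT * PT)%type | r%:E < dP pp.1 pp.2].
Proof.
rewrite -closedC.
have -> : ~` [set pp : (PT * PT)%type | r%:E < dP pp.1 pp.2] =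
   \bigcap_(eps in [set eps : R | (0 < eps)%R])
      [set pp : (PT * PT)%type | chain2 (val pp.1) (val pp.2) (r + eps)%:E].
  rewrite predeqE => -[p p'] /=; split.
    by move=> h; apply/(dP_le p p' r); rewrite leNgt; apply/negP.
  by move=> /(dP_le p p' r); rewrite leNgt => /negP.
apply: closed_bigI => eps _; rewrite Cset_eq.
by apply: closedU; apply: closedU; apply: G_closed.
Qed.

Definition Pm : metCH R :=
  @MetCH R PT dP dP_ge0 dP_refl dP_tri dP_sep dP_lsc PT_compact PT_hausdorff.

Lemma lP_mor b : mor (lP b : S -> Pm).
Proof.
split; first exact: lP_cont.
by move=> s s'; apply: ereal_inf_lbound; exact: chain2_step.
Qed.

Lemma lP_comm : (lP false : S -> Pm) \o q1 = lP true \o q0.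
Proof.
apply: funext => x; apply: val_inj => /=.
by rewrite /L eq0 eq1.
Qed.

Lemma P_pushout : is_pushout q1 q0 (lP false : S -> Pm) (lP true).
Proof.
split; [exact: lP_mor|exact: lP_mor|exact: lP_comm|].
move=> Q h1 h2 mh1 mh2 hc.
pose u (p : Pm) : Q :=
  if pselect (exists s, val p = L false s) then h1 (val p).1 else h2 (val p).2.
have hu b s : u (lP b s) = (if b then h2 else h1) s.
  rewrite /u; case: pselect => [[s' hs']|hn].
    case: b hs' => //= hs'.
    have [z [hz1 hz2]] := L_ov (esym hs').
    rewrite hz2 eq0.
    exact: (congr1 (fun f => f z) hc).
  by case: b hn => /= hn //; exfalso; apply: hn; exists s.
have u0 : u \o lP false = h1 by apply: funext => s0 /=; rewrite hu.
have u1 : u \o lP true = h2 by apply: funext => s0 /=; rewrite hu.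
exists u; split => //.
- split.
    apply: (@paste_cont S Pm Q (lP false) (lP true)).
    + exact: mc_compact.
    + exact: PT_hausdorff.
    + exact: lP_cont.
    + exact: lP_cont.
    + by move=> p; have [[|] [s ->]] := PT_cover p; exists s; [right|left].
    + by rewrite u0; exact: mh1.1.
    + by rewrite u1; exact: mh2.1.
  move=> p p'; apply: le_ereal_inf_tmp => c [i [s [r [j [r' [s' [h1' h2' h3 h4]]]]]]].
  have -> : p = lP i s by apply: val_inj.
  have -> : p' = lP j s' by apply: val_inj.
  have ur : u (lP i r) = u (lP j r').
    by congr u; apply: val_inj.
  apply: le_trans h4; apply: (le_trans (mc_d_triangle _ (u (lP i r)) _)).
  apply: leeD.
    by rewrite !hu; case: i {h1' h3 ur}; [exact: mh2.2|exact: mh1.2].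
  by rewrite ur !hu; case: j {h2' h3 ur}; [exact: mh2.2|exact: mh1.2].
- move=> v mv v0 v1; apply: funext => p.
  have [[|] [s ->]] := PT_cover p.
    by rewrite hu -v1.
  by rewrite hu -v0.
Qed.

Lemma split_rho : transitive_corel q0 q1 ->
  forall x y (eps : R), (0 < eps)%R -> exists w, rho x w + rho w y <= rho x y + eps%:E.
Proof.
move=> tr x y eps eps0.
have [t [mt t0 t1]] := tr Pm (lP false) (lP true) P_pushout.
have hle : dP (lP false (q0 x)) (lP true (q1 y)) <= rho x y.
  have -> : lP false (q0 x) = t (q0 x) by exact: (congr1 (fun f => f x) (esym t0)).
  have -> : lP true (q1 y) = t (q1 y) by exact: (congr1 (fun f => f y) (esym t1)).
  exact: mt.2.
have [ry|ny] := eqVneq (rho x y) +oo.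
  by exists x; rewrite ry addye ?leey.
have : dP (lP false (q0 x)) (lP true (q1 y)) < rho x y + eps%:E.
  apply: le_lt_trans hle _; rewrite lteDl ?lte_fin //.
  by rewrite fin_numE ny andbT gt_eqF // (lt_le_trans _ (rho_ge0 x y)) // ltNy0.
move/ereal_inf_lt => [c [i [s [r [j [r' [s' [h1 h2 h3 h4]]]]]]] clt].
case: i h1 h3 => h1 h3; last case: j h2 h3 => h2 h3.
- have [z [hz1 hz2]] := L_ov (esym h1).
  have xz := q01_eq hz1; subst z.
  exists x; have -> : rho x x = 0 by rewrite /rho -hz1 mc_d_refl.
  rewrite add0e.
  by rewrite leeDl // lee_fin ltW.
- move/L_inj: h1 => h1; move/L_inj: h2 => h2; subst s s'.
  have [z [hz1 hz2]] := L_ov h3; subst r r'.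
  exists z; apply: le_trans h4 _; exact: ltW.
- have [z [hz1 hz2]] := L_ov h2.
  have yz := q01_eq (esym hz2); subst z.
  exists y; have -> : rho y y = 0 by rewrite /rho hz2 mc_d_refl.
  rewrite adde0.
  by rewrite leeDl // lee_fin ltW.
Qed.

Lemma rho_lsc2 (r : R) : open [set pp : (X * X)%type | r%:E < rho pp.1 pp.2].
Proof.
apply: (@d_lsc _ (fun pp : (X * X)%type => q0 pp.1) (fun pp => q1 pp.2)).
  exact: (comp_cont (@cont_fst _ _) m0.1).
exact: (comp_cont (@cont_snd _ _) m1.1).
Qed.

Lemma rho_lsc_r x (r : R) : open [set w | r%:E < rho x w].
Proof. by apply: (@d_lsc _ (fun _ => q0 x) q1) => //; [exact: cst_continuous|exact: m1.1]. Qed.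

Lemma rho_lsc_l y (r : R) : open [set w | r%:E < rho w y].
Proof. by apply: (@d_lsc _ q0 (fun _ => q1 y)) => //; [exact: m0.1|exact: cst_continuous]. Qed.

Lemma key_lemma :
  (forall x y (eps : R), (0 < eps)%R -> exists w, rho x w + rho w y <= rho x y + eps%:E) ->
  forall x y (delta : R), (0 < delta)%R -> rho x y != +oo ->
  exists a, q0 a = q1 a /\ mc_d x a + mc_d a y <= rho x y + (delta + delta)%:E.
Proof.
move=> Hsplit x y delta delta0 fin.
pose ep (n : nat) : R := (delta / 2 ^+ n)%R.
have ep0 n : (0 < ep n)%R by rewrite divr_gt0 // exprn_gt0.
have epS n : (ep n.+1 + ep n.+1 = ep n)%R.
  by rewrite /ep exprS; field; rewrite expf_neq0.
have [f hf] := @choice _ _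
   (fun (nw : (nat * X)%type) w' => (rho nw.2 w' + rho w' y <= rho nw.2 y + (ep nw.1.+1)%:E)%E)
   (fun nw => Hsplit nw.2 y _ (ep0 nw.1.+1)).
have [w0 hw0] := Hsplit x y delta delta0.
pose w := fix w (n : nat) : X := match n with 0 => w0 | n'.+1 => f (n', w n') end.
pose G n := rho (w n) y + (ep n)%:E.
have rxy : rho x y = (fine (rho x y))%:E.
  by rewrite fineK // fin_numE fin andbT gt_eqF // (lt_le_trans _ (rho_ge0 x y)) // ltNy0.
have hA n : rho (w n) (w n.+1) + G n.+1 <= G n.
  rewrite /G -(epS n) EFinD addeA [X in _ <= X]addeA; apply: leeD2r; exact: (hf (n, w n)).
have hB n : rho x (w n) + G n <= rho x y + (delta + delta)%:E.
  elim: n => [|n IH].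
    rewrite /G /= /ep expr0 divr1 EFinD addeA [X in _ <= X]addeA; apply: leeD2r; exact: hw0.
  apply: le_trans IH; apply: (le_trans (leeD2r _ (rho_tri x (w n) (w n.+1)))).
  by rewrite -addeA; apply: leeD2l; exact: hA.
have G0 n : 0 <= G n by apply: adde_ge0; [exact: rho_ge0|rewrite lee_fin ltW].
have hC n : G n.+1 <= G n.
  apply: le_trans (hA n); rewrite leeDr //; exact: rho_ge0.
have hCm n m : (n <= m)%N -> G m <= G n.
  move=> /subnKC <-; elim: (m - n)%N => [|k IH]; first by rewrite addn0.
  by rewrite addnS; apply: le_trans (hC _) IH.
have hD i k : rho (w i) (w (i + k).+1) + G (i + k).+1 <= G i.
  elim: k => [|k IH]; first by rewrite addn0; exact: hA.
  apply: le_trans IH; rewrite addnS.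
  apply: (le_trans (leeD2r _ (rho_tri _ (w (i + k).+1) _))).
  by rewrite -addeA; apply: leeD2l; exact: hA.
pose Linf := ereal_inf (range G).
have L0 : 0 <= Linf by apply: le_ereal_inf_tmp => _ [n _ <-].
have LG n : Linf <= G n by apply: ereal_inf_lbound; exists n.
have GB n : G n <= rho x y + (delta + delta)%:E.
  by apply: le_trans (hB n); rewrite leeDr //; exact: rho_ge0.
have finB : forall a, 0 <= a -> a <= rho x y + (delta + delta)%:E -> a \is a fin_num.
  move=> a a0 aB; rewrite fin_numE gt_eqF ?(lt_le_trans _ a0) ?ltNy0 //=.
  by rewrite -ltey; apply: le_lt_trans aB _; rewrite rxy -EFinD ltry.
have Lfin : Linf \is a fin_num by apply: finB => //; exact: le_trans (LG 0%N) (GB 0%N).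
have cauchy eta : (0 < eta)%R -> exists N, forall i k, (N <= i)%N ->
    rho (w i) (w (i + k).+1) < eta%:E.
  move=> eta0; have [_ [N _ <-] hN] := lb_ereal_inf_adherent eta0 Lfin.
  exists N => i k Ni.
  have h1 := hD i k; have h2 := hCm _ _ Ni; have h3 := LG (i + k).+1.
  have Gfin : G (i + k).+1 \is a fin_num by apply: finB.
  rewrite -(lteD2rE _ _ Gfin); apply: le_lt_trans h1 _.
  apply: le_lt_trans h2 _; apply: lt_le_trans hN _.
  by rewrite addeC; apply: leeD2l.
have [z [_ clz]] := @mc_compact R X (w @ \oo) _ filterT.
have freq N Bs : nbhs z Bs -> exists n, (N <= n)%N /\ Bs (w n).
  move=> hBs.
  have hF : (w @ \oo) [set w n | n in [set n | (N <= n)%N]].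
    by apply: filterS (nbhs_infty_ge N) => n hn; exists n.
  by have [_ [[n hn <-] hBn]] := clz _ _ hF hBs; exists n.
have rzz : rho z z = 0.
  apply/le_anti/andP; split; last exact: rho_ge0.
  apply/lee_addgt0Pr => eta eta0; rewrite add0e.
  rewrite leNgt; apply/negP => hlt.
  have : nbhs (z, z) [set pp : (X * X)%type | eta%:E < rho pp.1 pp.2].
    by apply: open_nbhs_nbhs; split => //; exact: rho_lsc2.
  move=> [[U V] /= [hU hV] hUV].
  have [N hN] := cauchy eta eta0.
  have [i [Ni hi]] := freq N (U `&` V) (filterI hU hV).
  have [j [ij hj]] := freq i.+1 (U `&` V) (filterI hU hV).
  have := hN i (j - i.+1)%N Ni.
  have -> : (i + (j - i.+1)).+1 = j by rewrite -addSn subnKC.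
  have := hUV (w i, w j) (conj hi.1 hj.2) => /= h1 h2.
  by have := lt_trans h1 h2; rewrite ltxx.
have zA : q0 z = q1 z by exact: rho0_A.
have hz : rho x z + rho z y <= rho x y + (delta + delta)%:E.
  rewrite leNgt; apply/negP => hlt.
  pose c := (fine (rho x y) + (delta + delta))%R.
  have oc : open [set p | c%:E < rho x p + rho p y].
    apply: open_lsc_add; [exact: rho_lsc_r|exact: rho_lsc_l|move=> ?; exact: rho_ge0..].
  have hzO : c%:E < rho x z + rho z y by rewrite /c EFinD -rxy.
  have [n [_ hn]] := freq 0%N _ (open_nbhs_nbhs (conj oc hzO)).
  have := le_trans (leeD2l _ (leeDl (rho (w n) y) (ltW (ep0 n) : (0 <= (ep n)%:E)) : _ <= G n)) (hB n).
  rewrite rxy -EFinD -/c => h2.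
  by have := lt_le_trans hn h2; rewrite ltxx.
exists z; split => //; apply: le_trans hz; apply: leeD; exact: d_le_rho.
Qed.

Lemma effective_main : transitive_corel q0 q1 -> effective_corel q0 q1.
Proof.
move=> tr A i [mi eqi univ].
have key := key_lemma (split_rho tr).
have inA x : q0 x = q1 x -> exists a, i a = x.
  move=> hx.
  have mc : mor (fun _ : X => x).
    split; first exact: cst_continuous.
    by move=> ? ?; rewrite mc_d_refl; exact: mc_d_ge0.
  have [u [mu iu _]] := univ X (fun _ => x) mc (funext (fun _ => hx)).
  by exists (u x); exact: (congr1 (fun f => f x) iu).
split; [exact: m0|exact: m1|exact: eqi|].
move=> Q h1 h2 mh1 mh2 hc.
have hA a : q0 a = q1 a -> h1 a = h2 a.
  by move=> /inA [b <-]; exact: (congr1 (fun f => f b) hc).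
have cross (g g' : X -> Q) : mor g -> mor g' -> (forall a, q0 a = q1 a -> g a = g' a) ->
    forall x y, mc_d (g x) (g' y) <= rho x y.
  move=> mg mg' gg' x y.
  have [->|ny] := eqVneq (rho x y) +oo; first exact: leey.
  apply/lee_addgt0Pr => eps eps0.
  have eps20 : (0 < eps / 2)%R by rewrite divr_gt0.
  have [a [aA ha]] := key x y (eps / 2)%R eps20 ny.
  rewrite -(splitr eps) in ha; apply: le_trans ha.
  apply: (le_trans (mc_d_triangle _ (g a) _)); apply: leeD; first exact: mg.2.
  by rewrite gg' //; exact: mg'.2.
pose u (s : S) : Q := if pselect (exists x, q0 x = s) then h1 (e s) else h2 (e s).
have hu0 x : u (q0 x) = h1 x.
  rewrite /u; case: pselect => [hx|hn]; first by rewrite eq0.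
  by exfalso; apply: hn; exists x.
have hu1 x : u (q1 x) = h2 x.
  rewrite /u; case: pselect => [[x' hx']|hn]; last by rewrite eq1.
  have xx := q01_eq hx'; subst x'.
  by rewrite eq1; exact: hA.
have u0 : u \o q0 = h1 by apply: funext => x /=; rewrite hu0.
have u1 : u \o q1 = h2 by apply: funext => x /=; rewrite hu1.
exists u; split => //.
- split.
    apply: (@paste_cont X S Q q0 q1).
    + exact: mc_compact.
    + exact: mc_hausdorff.
    + exact: m0.1.
    + exact: m1.1.
    + exact: sur.
    + by rewrite u0; exact: mh1.1.
    + by rewrite u1; exact: mh2.1.
  move=> s s'; have [x [<-|<-]] := sur s; have [y [<-|<-]] := sur s'.
  + by rewrite !hu0 iso0; exact: mh1.2.
  + by rewrite hu0 hu1; exact: cross.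
  + rewrite hu1 hu0 rho_sym; apply: cross => // a aA; exact/esym/hA.
  + by rewrite !hu1 iso1; exact: mh2.2.
- move=> v mv v0 v1; apply: funext => s.
  have [x [<-|<-]] := sur s.
    by rewrite hu0 -v0.
  by rewrite hu1 -v1.
Qed.

End Corel.

Theorem theorem5p15 (R : realType) (X S : metCH R) (q0 q1 : X -> S) :
  equivalence_corel q0 q1 -> effective_corel q0 q1.
Proof.
move=> [[m0 m1 sur] [e [me e0 e1]] [sw [msw sw0 sw1]] tr].
exact: (effective_main m0 m1 me e0 e1 msw sw0 sw1 sur tr).
Qed.
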